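(* Fix $\varepsilon>0$. Then there exists $\gamma=\gamma(\varepsilon)>0$ such that for every $n$ there exist two sets $X_1,X_2\subseteq\mathbb{R}^2$ with $|X_1|,|X_2|\le n$ such that (i) the diameter of $X_2$ is at most $\varepsilon$, and (ii) the number of pairs $(x_1,x_2)\in X_1\times X_2$ with $\|x_1-x_2\|=1$ is at least $\gamma\, u_2(n,n)$.
   Context: $u_2(m,n)$ denotes the maximum, over sets $A$ of $m$ points and $B$ of $n$ points in $\mathbb{R}^2$, of the number of pairs $(a,b)\in A\times B$ with $\|a-b\|=1$ (equivalently, the maximum number of incidences between $m$ points and $n$ unit circles in the plane). *)

(* Defs.v *)
(* concrete reals R, points of R^2 as R * R, finite point
   sets as duplicate-free lists. *)
From Stdlib Require Import Reals Lra List ClassicalEpsilon.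
Import ListNotations.
Open Scope R_scope.

Definition point := (R * R)%type.

Definition dist2 (p q : point) : R :=
  sqrt ((fst p - fst q) ^ 2 + (snd p - snd q) ^ 2).

Definition unit_pairs (A B : list point) : nat :=
  length (filter (fun ab => if Req_EM_T (dist2 (fst ab) (snd ab)) 1
                            then true else false) (list_prod A B)).

Definition achieved (m n k : nat) : Prop :=
  exists A B : list point, NoDup A /\ NoDup B /\ length A = m /\
    length B = n /\ unit_pairs A B = k.

Fixpoint max_achieved (m n b : nat) : nat :=
  match b with
  | O => O
  | S b' => if excluded_middle_informative (achieved m n (S b'))
            then S b' else max_achieved m n b'
  end.

(* u_2(m,n): the maximum number of unit-distance pairs between m points and
   n points in the plane (always <= m*n). *)
Definition u2 (m n : nat) : nat := max_achieved m n (m * n).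

Definition diam_le (X : list point) (eps : R) : Prop :=
  forall p q, In p X -> In q X -> dist2 p q <= eps.

(* Main.v *)
Require Import Defs.
From Stdlib Require Import Reals List.
From Stdlib Require Import Lra Lia ZArith ClassicalEpsilon.
Import ListNotations.
Open Scope R_scope.

Definition isu (ab : point * point) : bool :=
  if Req_EM_T (dist2 (fst ab) (snd ab)) 1 then true else false.

Lemma u2_spec : forall m n b, max_achieved m n b = 0%nat \/ achieved m n (max_achieved m n b).
Proof.
  intros m n b; induction b as [|b IH]; simpl; [now left|].
  destruct (excluded_middle_informative (achieved m n (S b))); [now right| exact IH].
Qed.

Definition fl (x : R) : Z := (up x - 1)%Z.
Lemma fl_spec x : IZR (fl x) <= x < IZR (fl x) + 1.
Proof. unfold fl; rewrite minus_IZR; destruct (archimed x); simpl; lra. Qed.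

Definition cell (s : R) (p : point) : Z * Z := (fl (fst p / s), fl (snd p / s)).
Definition cadd (c d : Z * Z) : Z * Z := ((fst c + fst d)%Z, (snd c + snd d)%Z).
Definition gz (i : Z) : R := atan (IZR i) / 2.
Definition tr (s tau : R) (c : Z * Z) (p : point) : point :=
  (fst p + tau * gz (fst c) - s * IZR (fst c), snd p + tau * gz (snd c) - s * IZR (snd c)).
Definition badval (s : R) (p q : point) (c c' : Z * Z) : R :=
  if Z.eq_dec (fst c) (fst c') then
    (snd q - snd p + s * (IZR (snd c) - IZR (snd c'))) / (gz (snd c) - gz (snd c'))
  else (fst q - fst p + s * (IZR (fst c) - IZR (fst c'))) / (gz (fst c) - gz (fst c')).

Lemma gz_inj i j : i <> j -> gz i <> gz j.
Proof.
  intros H E; unfold gz in E.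
  destruct (Z.lt_total i j) as [h|[h|h]]; [|contradiction|].
  - apply IZR_lt, atan_increasing in h; lra.
  - apply IZR_lt, atan_increasing in h; lra.
Qed.

Lemma gz_bound i : -1 <= gz i <= 1.
Proof. unfold gz; pose proof (atan_bound (IZR i)); pose proof PI_4; lra. Qed.

Lemma dist2_tr s tau c p q : dist2 (tr s tau c p) (tr s tau c q) = dist2 p q.
Proof.
  unfold dist2, tr; simpl. f_equal. ring.
Qed.

Lemma tr_bad s tau c c' p q : tr s tau c p = tr s tau c' q -> c <> c' -> tau = badval s p q c c'.
Proof.
  intros E Hne; unfold tr in E; injection E; intros Ey Ex.
  unfold badval. destruct (Z.eq_dec (fst c) (fst c')) as [e|e].
  - assert (n2 : snd c <> snd c').
    { intro e2; apply Hne; destruct c, c'; simpl in *; subst; reflexivity. }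
    pose proof (gz_inj _ _ n2).
    field_simplify_eq; [lra| lra].
  - pose proof (gz_inj _ _ e). field_simplify_eq; [lra|lra].
Qed.

Lemma tr_same s tau c p q : tr s tau c p = tr s tau c q -> p = q.
Proof.
  unfold tr; intro E; injection E; intros; destruct p, q; simpl in *; f_equal; lra.
Qed.

Lemma avoid : forall (L : list R) r, 0 < r -> exists t, 0 < t <= r /\ ~ In t L.
Proof.
  induction L as [|x L IH]; intros r Hr.
  - exists r; simpl; split; [lra|tauto].
  - destruct (Rlt_dec 0 x) as [hx|hx].
    + destruct (IH (Rmin r x / 2)) as [t [[h1 h2] h3]].
      { unfold Rmin; destruct (Rle_dec r x); lra. }
      exists t; split. { split; [lra|]. unfold Rmin in h2; destruct (Rle_dec r x); lra. }
      simpl; intros [h|h]; [|tauto]. subst. unfold Rmin in h2; destruct (Rle_dec r t); lra.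
    + destruct (IH r Hr) as [t [[h1 h2] h3]].
      exists t; split; [lra|]. simpl; intros [h|h]; [subst; lra|tauto].
Qed.

Lemma NoDup_prod {X Y} (A : list X) (B : list Y) : NoDup A -> NoDup B -> NoDup (list_prod A B).
Proof.
  intros HA HB; induction HA as [|a A Ha HA IH]; simpl; [constructor|].
  apply NoDup_app; auto.
  - apply NoDup_map_NoDup_ForallPairs; auto.
    intros x y _ _ E; now injection E.
  - intros [x y] h1 h2. apply in_map_iff in h1. destruct h1 as [z [e _]]. injection e; intros; subst.
    apply in_prod_iff in h2. tauto.
Qed.

Lemma inj_count {T U} (L : list T) (L' : list U) (P : T -> bool) (Q : U -> bool) (h : T -> U) :
  NoDup L ->
  (forall x y, In x L -> In y L -> P x = true -> P y = true -> h x = h y -> x = y) ->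
  (forall x, In x L -> P x = true -> In (h x) L' /\ Q (h x) = true) ->
  (length (filter P L) <= length (filter Q L'))%nat.
Proof.
  intros HN Hi Hm.
  rewrite <- (length_map h).
  apply NoDup_incl_length.
  - apply NoDup_map_NoDup_ForallPairs.
    + intros x y hx hy. apply filter_In in hx, hy. apply Hi; tauto.
    + apply NoDup_filter; auto.
  - intros y hy. apply in_map_iff in hy. destruct hy as [x [<- hx]].
    apply filter_In in hx. apply filter_In. apply Hm; tauto.
Qed.

Lemma sum_ge {K} (D : list K) (F : K -> nat) d : In d D -> (F d <= list_sum (map F D))%nat.
Proof.
  induction D as [|e D IH]; simpl; [tauto|]. intros [<-|h]; [lia|]. specialize (IH h); lia.
Qed.

Lemma sum_split {X K} (L : list X) (D : list K) (Q : X -> bool) (Pd : K -> X -> bool) :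
  (forall x, Q x = true -> exists d, In d D /\ Pd d x = true) ->
  (length (filter Q L) <= list_sum (map (fun d => length (filter (Pd d) L)) D))%nat.
Proof.
  intros H. induction L as [|x L IH]; simpl.
  - lia.
  - assert (E : forall D', list_sum (map (fun d => length (if Pd d x then x :: filter (Pd d) L else filter (Pd d) L)) D')
      = (list_sum (map (fun d => if Pd d x then 1 else 0) D') + list_sum (map (fun d => length (filter (Pd d) L)) D'))%nat).
    { induction D' as [|e D' IH']; simpl; [lia|]. rewrite IH'. destruct (Pd e x); simpl; lia. }
    rewrite E. destruct (Q x) eqn:Hq; simpl; [|lia].
    destruct (H x Hq) as [d [hd hp]].
    pose proof (sum_ge D (fun d => if Pd d x then 1%nat else 0%nat) d hd) as G. simpl in G. rewrite hp in G. lia.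
Qed.

Lemma sum_mono {K} (D : list K) (F G : K -> nat) : (forall d, In d D -> (F d <= G d)%nat) ->
  (list_sum (map F D) <= list_sum (map G D))%nat.
Proof.
  induction D as [|e D IH]; simpl; intros H; [lia|].
  pose proof (H e (or_introl eq_refl)). assert (list_sum (map F D) <= list_sum (map G D))%nat by (apply IH; auto). lia.
Qed.

Lemma avg {K} (D : list K) (F : K -> nat) (I : nat) : D <> [] -> (I <= list_sum (map F D))%nat ->
  exists d, In d D /\ (I <= length D * F d)%nat.
Proof.
  intros Hne HI.
  assert (Hmax : exists d, In d D /\ forall e, In e D -> (F e <= F d)%nat).
  { clear HI. induction D as [|x D IH]; [congruence|].
    destruct D as [|y D'].
    - exists x; split; [left; auto|]. intros e [<-|[]]; lia.
    - destruct IH as [d [hd hm]]; [congruence|].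
      destruct (Nat.le_gt_cases (F x) (F d)).
      + exists d; split; [right; auto|]. intros e [<-|he]; auto.
      + exists x; split; [left; auto|]. intros e [<-|he]; [lia|]. specialize (hm e he); lia. }
  destruct Hmax as [d [hd hm]]. exists d; split; auto.
  assert (list_sum (map F D) <= length D * F d)%nat; [|lia].
  clear HI hd Hne. induction D as [|x D IH]; simpl; [lia|].
  pose proof (hm x (or_introl eq_refl)). assert (list_sum (map F D) <= length D * F d)%nat by (apply IH; intros e he; apply hm; right; exact he). lia.
Qed.

Definition rng (M : nat) : list Z := map (fun k => (Z.of_nat k - Z.of_nat M)%Z) (seq 0 (2 * M + 1)).
Definition DD (M : nat) : list (Z * Z) := list_prod (rng M) (rng M).

Lemma in_rng M z : (- Z.of_nat M <= z <= Z.of_nat M)%Z -> In z (rng M).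
Proof.
  intros H. unfold rng. apply in_map_iff. exists (Z.to_nat (z + Z.of_nat M)).
  split; [lia|]. apply in_seq. lia.
Qed.

Lemma length_DD M : length (DD M) = ((2 * M + 1) * (2 * M + 1))%nat.
Proof. unfold DD, rng. rewrite length_prod, length_map, length_seq. reflexivity. Qed.

Lemma Rabs_le_inv a b : Rabs a <= b -> - b <= a <= b.
Proof. intros h; pose proof (Rle_abs a); pose proof (Rle_abs (- a)); rewrite Rabs_Ropp in *; lra. Qed.

Lemma fl_diff s M u w : 0 < s -> 1 / s + 1 <= INR M -> Rabs (u - w) <= 1 ->
  (- Z.of_nat M <= fl (u / s) - fl (w / s) <= Z.of_nat M)%Z.
Proof.
  intros hs hM hu.
  pose proof (fl_spec (u / s)); pose proof (fl_spec (w / s)).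
  assert (Hd : Rabs (u / s - w / s) <= 1 / s).
  { replace (u / s - w / s) with ((u - w) * (1 / s)) by (field; lra).
    rewrite Rabs_mult, (Rabs_right (1 / s)) by (apply Rle_ge, Rlt_le; unfold Rdiv; rewrite Rmult_1_l; apply Rinv_0_lt_compat; lra).
    assert (0 < 1 / s) by (unfold Rdiv; rewrite Rmult_1_l; apply Rinv_0_lt_compat; lra).
    nra. }
  rewrite INR_IZR_INZ in hM.
  apply Rabs_le_inv in Hd.
  split.
  - apply le_IZR. rewrite minus_IZR, opp_IZR. lra.
  - apply le_IZR. rewrite minus_IZR. lra.
Qed.

Lemma unit_near s M a b : 0 < s -> 1 / s + 1 <= INR M -> dist2 a b = 1 ->
  In ((fst (cell s b) - fst (cell s a))%Z, (snd (cell s b) - snd (cell s a))%Z) (DD M).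
Proof.
  intros hs hM hd. unfold dist2 in hd.
  set (X := (fst a - fst b) ^ 2 + (snd a - snd b) ^ 2) in hd.
  assert (HX : X = 1).
  { assert (0 <= X) by (unfold X; pose proof (pow2_ge_0 (fst a - fst b)); pose proof (pow2_ge_0 (snd a - snd b)); lra). pose proof (sqrt_sqrt X H). rewrite hd in H0. lra. }
  unfold X in HX.
  pose proof (pow2_ge_0 (fst a - fst b)); pose proof (pow2_ge_0 (snd a - snd b)).
  assert (q1 : (fst b - fst a) * (fst b - fst a) <= 1) by (simpl in *; nra).
  assert (q2 : (snd b - snd a) * (snd b - snd a) <= 1) by (simpl in *; nra).
  assert (h1 : Rabs (fst b - fst a) <= 1) by (apply Rabs_le; split; nra).
  assert (h2 : Rabs (snd b - snd a) <= 1) by (apply Rabs_le; split; nra).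
  unfold DD; apply in_prod_iff; split; apply in_rng; unfold cell; simpl; apply fl_diff; auto.
Qed.

Lemma frac s x : 0 < s -> 0 <= x - s * IZR (fl (x / s)) < s.
Proof.
  intros hs. pose proof (fl_spec (x / s)) as [h1 h2].
  assert (e : x = s * (x / s)) by (field; lra).
  split.
  - assert (s * IZR (fl (x / s)) <= s * (x / s)) by (apply Rmult_le_compat_l; lra). lra.
  - assert (s * (x / s) < s * (IZR (fl (x / s)) + 1)) by (apply Rmult_lt_compat_l; lra). lra.
Qed.

Lemma coord_close s tau x y i j : 0 < s -> 0 <= tau ->
  i = fl (x / s) -> j = fl (y / s) ->
  Rabs ((x + tau * gz i - s * IZR i) - (y + tau * gz j - s * IZR j)) <= s + 2 * tau.
Proof.
  intros hs ht -> ->. pose proof (frac s x hs); pose proof (frac s y hs).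
  pose proof (gz_bound (fl (x / s))); pose proof (gz_bound (fl (y / s))).
  apply Rabs_le. nra.
Qed.

Theorem proposition3p2 :
  forall eps : R, 0 < eps ->
  exists gamma : R, 0 < gamma /\
  forall n : nat,
  exists X1 X2 : list point,
    NoDup X1 /\ NoDup X2 /\
    (length X1 <= n)%nat /\ (length X2 <= n)%nat /\
    diam_le X2 eps /\
    INR (unit_pairs X1 X2) >= gamma * INR (u2 n n).
Proof.
  intros eps Heps.
  set (s := eps / 4).
  assert (hs : 0 < s) by (unfold s; lra).
  destruct (INR_archimed 1 (1 / s + 1)) as [M HM]; [lra|].
  assert (hM : 1 / s + 1 <= INR M) by lra.
  set (K := ((2 * M + 1) * (2 * M + 1))%nat).
  assert (hK : 0 < INR K) by (apply lt_0_INR; unfold K; lia).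
  exists (1 / INR K). split; [unfold Rdiv; rewrite Rmult_1_l; apply Rinv_0_lt_compat; exact hK|].
  intro n. unfold u2.
  destruct (u2_spec n n (n * n)) as [H0|Hach].
  { exists [], []. rewrite H0. split; [constructor|]. split; [constructor|].
    split; [simpl; lia|]. split; [simpl; lia|]. split.
    - intros p q [].
    - simpl; lra. }
  destruct Hach as [A [B [HA [HB [LA [LB HI]]]]]].
  set (I := max_achieved n n (n * n)) in *.
  set (P := A ++ B).
  set (C := map (cell s) B ++ flat_map (fun d => map (fun a => cadd (cell s a) d) A) (DD M)).
  set (Bad := map (fun x => badval s (fst (fst x)) (snd (fst x)) (fst (snd x)) (snd (snd x)))
                  (list_prod (list_prod P P) (list_prod C C))).
  destruct (avoid Bad (eps / 8)) as [tau [[ht1 ht2] ht3]]; [lra|].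
  assert (noc : forall p q c c', In p P -> In q P -> In c C -> In c' C ->
             tr s tau c p = tr s tau c' q -> p = q /\ c = c').
  { intros p q c c' hp hq hc hc' E.
    destruct (excluded_middle_informative (c = c')) as [e|ne].
    - subst c'; split; auto; eapply tr_same; eauto.
    - exfalso; apply ht3. pose proof (tr_bad _ _ _ _ _ _ E ne) as Hb.
      unfold Bad. apply in_map_iff. exists ((p, q), (c, c')). split; [simpl; auto|].
      apply in_prod_iff; split; apply in_prod_iff; split; auto. }
  assert (inPA : forall a, In a A -> In a P) by (intros; apply in_or_app; auto).
  assert (inPB : forall a, In a B -> In a P) by (intros; apply in_or_app; auto).
  assert (inCB : forall b, In b B -> In (cell s b) C) by (intros; apply in_or_app; left; apply in_map; auto).
  assert (inCA : forall a d, In a A -> In d (DD M) -> In (cadd (cell s a) d) C).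
  { intros a d ha hd. apply in_or_app; right; apply in_flat_map; exists d; split; auto; apply in_map_iff; exists a; auto. }
  set (X2 := map (fun b => tr s tau (cell s b) b) B).
  set (X1 := fun d => map (fun a => tr s tau (cadd (cell s a) d) a) A).
  set (Pd := fun (d : Z * Z) (ab : point * point) =>
     (isu ab && Z.eqb (fst (cell s (snd ab)) - fst (cell s (fst ab))) (fst d)
            && Z.eqb (snd (cell s (snd ab)) - snd (cell s (fst ab))) (snd d))%bool%Z).
  assert (Hd : forall d, In d (DD M) -> (length (filter (Pd d) (list_prod A B)) <= unit_pairs (X1 d) X2)%nat).
  { intros d hd. unfold unit_pairs.
    apply (inj_count _ _ _ _ (fun ab => (tr s tau (cadd (cell s (fst ab)) d) (fst ab), tr s tau (cell s (snd ab)) (snd ab)))).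
    - apply NoDup_prod; auto.
    - intros [a b] [a' b'] hx hy _ _ E. apply in_prod_iff in hx, hy. simpl in E. apply pair_equal_spec in E as [E1 E2].
      destruct (noc _ _ _ _ (inPA _ (proj1 hx)) (inPA _ (proj1 hy)) (inCA _ _ (proj1 hx) hd) (inCA _ _ (proj1 hy) hd) E1) as [-> _].
      destruct (noc _ _ _ _ (inPB _ (proj2 hx)) (inPB _ (proj2 hy)) (inCB _ (proj2 hx)) (inCB _ (proj2 hy)) E2) as [-> _].
      reflexivity.
    - intros [a b] hx hp. apply in_prod_iff in hx. simpl. split.
      + apply in_prod_iff; split; unfold X1, X2; apply in_map_iff; [exists a | exists b]; tauto.
      + unfold Pd in hp; cbn [fst snd] in hp. apply andb_prop in hp as [hp h2]; apply andb_prop in hp as [hp h1].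
        apply Z.eqb_eq in h1, h2.
        assert (Hc : cadd (cell s a) d = cell s b).
        { unfold cadd. destruct (cell s a), (cell s b), d; cbn [fst snd] in *; f_equal; lia. }
        rewrite Hc, dist2_tr. unfold isu in hp; simpl in hp. exact hp. }
  assert (Hsum : (I <= list_sum (map (fun d => unit_pairs (X1 d) X2) (DD M)))%nat).
  { rewrite <- HI. eapply Nat.le_trans; [| apply sum_mono; exact Hd ].
    unfold unit_pairs. apply sum_split. intros [a b] hq.
    exists ((fst (cell s b) - fst (cell s a))%Z, (snd (cell s b) - snd (cell s a))%Z). split.
    - apply unit_near; auto. simpl in hq. destruct (Req_EM_T (dist2 a b) 1); [auto| discriminate].
    - unfold Pd. change (isu (a, b) = true) in hq. rewrite hq. simpl. rewrite !Z.eqb_refl. reflexivity. }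
  destruct (avg (DD M) (fun d => unit_pairs (X1 d) X2) I) as [d [hdD hle]]; auto.
  { intro E; pose proof (length_DD M) as L; rewrite E in L; simpl in L; lia. }
  exists (X1 d), X2. repeat split.
  - apply NoDup_map_NoDup_ForallPairs; auto. intros a a' ha ha' E.
    exact (proj1 (noc _ _ _ _ (inPA _ ha) (inPA _ ha') (inCA _ _ ha hdD) (inCA _ _ ha' hdD) E)).
  - apply NoDup_map_NoDup_ForallPairs; auto. intros a a' ha ha' E.
    exact (proj1 (noc _ _ _ _ (inPB _ ha) (inPB _ ha') (inCB _ ha) (inCB _ ha') E)).
  - unfold X1; rewrite length_map; lia.
  - unfold X2; rewrite length_map; lia.
  - intros p q hp hq. unfold X2 in hp, hq; apply in_map_iff in hp, hq.
    destruct hp as [b [<- hb]], hq as [b' [<- hb']].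
    pose proof (coord_close s tau (fst b) (fst b') (fl (fst b / s)) (fl (fst b' / s)) hs (Rlt_le _ _ ht1) eq_refl eq_refl) as c1.
    pose proof (coord_close s tau (snd b) (snd b') (fl (snd b / s)) (fl (snd b' / s)) hs (Rlt_le _ _ ht1) eq_refl eq_refl) as c2.
    apply Rabs_le_inv in c1, c2.
    assert (e1 : s + 2 * tau <= eps / 2) by (unfold s; lra).
    unfold dist2, tr, cell; simpl.
    set (u := fst b + tau * gz (fl (fst b / s)) - s * IZR (fl (fst b / s)) -
        (fst b' + tau * gz (fl (fst b' / s)) - s * IZR (fl (fst b' / s)))) in *.
    set (v := snd b + tau * gz (fl (snd b / s)) - s * IZR (fl (snd b / s)) -
        (snd b' + tau * gz (fl (snd b' / s)) - s * IZR (fl (snd b' / s)))) in *.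
    rewrite <- (sqrt_pow2 eps) by lra. apply sqrt_le_1_alt.
    assert (u * u <= eps * eps / 4) by nra.
    assert (v * v <= eps * eps / 4) by nra.
    simpl. nra.
  - rewrite length_DD in hle. fold K in hle. apply le_INR in hle. rewrite mult_INR in hle.
    apply Rle_ge. set (w := INR (unit_pairs (X1 d) X2)) in *.
    apply (Rmult_le_reg_l (INR K)); auto.
    replace (INR K * (1 / INR K * INR I)) with (INR I) by (field; lra). lra.
Qed.
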